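(* Let $\mu$ be a probability measure on $\mathbb R$ with bounded support and let $b=\sup\operatorname{supp}\mu$. Then the map $\Phi:(b,\infty)\to\mathbb R$, $\Phi(x)=\dfrac{G_\mu(x)^2}{G_\mu'(x)}$, is continuous, nonincreasing, and takes values in $[-1,0]$.
   Context: $G_\mu(z)=\int\frac{1}{z-t}\,d\mu(t)$ is the Cauchy transform of $\mu$ for $z\notin\operatorname{supp}\mu$, and $G_\mu'$ denotes its derivative. *)

(* Defs.v *)
From HB Require Import structures.
From mathcomp Require Import all_boot all_order all_algebra.
From mathcomp Require Import all_classical all_reals all_analysis.
Set Implicit Arguments. Unset Strict Implicit. Unset Printing Implicit Defensive.
Import Order.TTheory GRing.Theory Num.Theory.
Import numFieldNormedType.Exports.
Local Open Scope classical_set_scope.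
Local Open Scope ring_scope.

(* Support of a measure on R: points all of whose (open ball) neighbourhoods
   have positive measure (the smallest closed set of full measure). *)
Definition msupport (R : realType) (mu : {measure set R -> \bar R}) : set R :=
  [set x | forall e : R, 0 < e -> (0 < mu (ball x e))%E].

Definition cauchy_transform (R : realType) (mu : {measure set R -> \bar R})
  (x : R) : R :=
  (\int[mu]_(t in setT) (x - t)^-1)%R.

(* Main.v *)
Require Import Defs.
From HB Require Import structures.
From mathcomp Require Import all_boot all_order all_algebra.
From mathcomp Require Import all_classical all_reals all_analysis.
From mathcomp Require Import measurable_realfun.
From mathcomp.algebra_tactics Require Import ring lra.
Import Order.TTheory GRing.Theory Num.Theory.
Import numFieldNormedType.Exports.
Local Open Scope classical_set_scope.
Local Open Scope ring_scope.
Lemma pos_supp (R : realType) (mu : {measure set R -> \bar R}) (p q : R) :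
  p <= q -> (0 < mu `]p, q]%classic)%E -> exists c, p <= c <= q /\ msupport mu c.
Proof.
move=> pq mpq.
pose T := [set y | p <= y <= q /\ (0 < mu `]y, q]%classic)%E].
have Tp : T p by split => //; rewrite lexx pq.
have ubT : ubound T q by move=> y [/andP[]].
have hsT : has_sup T by split; [exists p|exists q].
set c := sup T.
have pc : p <= c by apply: sup_upper_bound.
have cq : c <= q by apply: ge_sup => //; exists p.
exists c; split; first by rewrite pc cq.
move=> e e0.
have [y Ty cy] := sup_adherent e0 hsT.
have yc : y <= c by apply: sup_upper_bound.
pose z := c + e / 2.
have cz : c < z by rewrite /z ltrDl divr_gt0.
have z0 : mu `]z, q]%classic = 0%E.
  have [zq|qz] := leP z q.
    apply/eqP; rewrite -measure_le0; rewrite leNgt; apply/negP => h.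
    have : T z by split => //; rewrite zq andbT (le_trans pc) // ltW.
    by move/sup_upper_bound => /(_ hsT); rewrite -/c leNgt cz.
  by rewrite set_itv_ge ?measure0 // bnd_simp -leNgt ltW.
have [_ ypos] := Ty.
apply: (lt_le_trans ypos).
apply: (@le_trans _ _ (mu (`]y, z]%classic `|` `]z, q]%classic))).
  apply: le_measure; rewrite ?inE //=; try exact: measurableU.
  move=> t /=; rewrite !in_itv /= => /andP[yt tq].
  case: (leP t z) => tz; [left|right]; rewrite /= ?in_itv /= ?yt ?tz ?tq //.
apply: (le_trans (measureU2 _ _ _)) => //.
rewrite [X in (_ + X <= _)%E](_ : _ = 0%E); last exact: z0.
rewrite adde0 ball_itv; apply: le_measure; rewrite ?inE //=.
move=> t /=; rewrite !in_itv /= => /andP[yt tz].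
apply/andP; split.
  exact: lt_trans cy yt.
apply: (le_lt_trans tz); rewrite /z ltrD2l ltr_pdivrMr // ltr_pMr //.
by rewrite ltr1n.
Qed.
Arguments pos_supp {R mu p q}.

Lemma big_n (R : realType) (d : R) : 0 < d ->
  exists n : nat, d < n.+1%:R /\ n.+1%:R^-1 < d.
Proof.
move=> d0; exists (Num.truncn (d + d^-1)).
have h := truncnS_gt (d + d^-1); set N := _.+1%:R in h *.
have N0 : 0 < N by rewrite /N ltr0n.
split; first by apply: le_lt_trans h; rewrite lerDl invr_ge0 ltW.
rewrite -invf_plt //; apply: le_lt_trans h; rewrite lerDr ltW //.
Qed.
Arguments big_n {R d}.

Lemma null_out (R : realType) (mu : {measure set R -> \bar R}) (M b : R) :
  (forall c, msupport mu c -> -M <= c <= b) -> mu (~` `[-M, b]%classic) = 0%E.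
Proof.
move=> hs.
have H1 p q : b < p -> mu `]p, q]%classic = 0%E.
  move=> bp; have [pq|qp] := leP p q; last first.
    by rewrite set_itv_ge ?measure0 // bnd_simp -leNgt ltW.
  apply/eqP; rewrite -measure_le0 leNgt; apply/negP => /(pos_supp pq).
  move=> [c [/andP[pc _] /hs /andP[_ cb]]].
  by move: (lt_le_trans bp (le_trans pc cb)); rewrite ltxx.
have H2 p q : q < -M -> mu `]p, q]%classic = 0%E.
  move=> qM; have [pq|qp] := leP p q; last first.
    by rewrite set_itv_ge ?measure0 // bnd_simp -leNgt ltW.
  apply/eqP; rewrite -measure_le0 leNgt; apply/negP => /(pos_supp pq).
  move=> [c [/andP[_ cq] /hs /andP[Mc _]]].
  by move: (lt_le_trans qM (le_trans Mc cq)); rewrite ltxx.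
pose F (n : nat) := (`]-M - n.+1%:R, -M - n.+1%:R^-1]%classic `|`
   `]b + n.+1%:R^-1, b + n.+1%:R]%classic).
have nF n : mu.-negligible (F n).
  apply/negligibleP; first exact: measurableU.
  apply/eqP; rewrite -measure_le0; apply: le_trans (measureU2 _ _ _) _ => //.
  rewrite [X in (X + _ <= _)%E](_ : _ = 0%E); last first.
    by apply: H2; rewrite ltrBlDr ltrDl invr_gt0 ltr0n.
  rewrite [X in (_ + X <= _)%E](_ : _ = 0%E) ?adde0 //.
  by apply: H1; rewrite ltrDl invr_gt0 ltr0n.
have : mu.-negligible (\bigcup_n F n) by exact: negligible_bigcup.
move=> nU; apply/negligibleP; first exact: measurableC.
apply: (negligibleS _ nU) => t /=; rewrite in_itv /= => /negP; rewrite negb_and -!ltNge.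
case/orP => [tM|bt].
  have d0 : 0 < -M - t by rewrite subr_gt0.
  have [n [h1 h2]] := big_n d0.
  exists n => //; left; rewrite /= in_itv /=.
  apply/andP; split.
    by rewrite ltrBlDr -ltrBlDl.
  by rewrite lerBrDr -lerBrDl ltW.
have d0 : 0 < t - b by rewrite subr_gt0.
have [n [h1 h2]] := big_n d0.
exists n => //; right; rewrite /= in_itv /=.
apply/andP; split.
  by rewrite -ltrBrDl.
by rewrite -lerBlDl ltW.
Qed.
Lemma intTE (R : realType) (mu : {measure set R -> \bar R}) (E : set R) :
  measurable E -> mu (~` E) = 0%E -> forall g : R -> R, measurable_fun setT g ->
  \int[mu]_(t in setT) g t = \int[mu]_(t in E) g t.
Proof.
move=> mE m0 g mg.
rewrite /Rintegral -(setUv E) integral_setU //; last 3 first.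
- exact: measurableC.
- by apply/measurable_EFinP; rewrite setUv.
- by rewrite disj_set2E setICr.
rewrite [X in (_ + X)%E]null_set_integral ?adde0 //; first exact: measurableC.
apply/measurable_EFinP; exact: measurable_funS mg.
Qed.

Lemma meas_inv (R : realType) (x : R) : measurable_fun setT (fun t : R => (x - t)^-1).
Proof.
have minv : measurable_fun setT (@GRing.inv R).
  rewrite -(setUv [set 0]); apply/measurable_funU => //; first exact: measurableC.
  split; first exact: measurable_fun_set1.
  apply: open_continuous_measurable_fun; first by apply: closed_openC; exact: closed_eq.
  move=> y; rewrite inE /= => /eqP y0; exact: inv_continuous.
apply: measurableT_comp => //.
apply: measurable_funB => //.
Qed.

Lemma bdd_int (R : realType) (mu : {measure set R -> \bar R}) (E : set R) (g : R -> R) (C : R) :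
  measurable E -> (mu E < +oo)%E -> measurable_fun E g -> (forall t, E t -> `|g t| <= C) ->
  mu.-integrable E (EFin \o g).
Proof.
move=> mE Efin mg gC; apply/integrableP; split; first exact/measurable_EFinP.
apply: le_lt_trans.
  apply: (integral_le_bound (`|C|)%:E) => //; first exact/measurable_EFinP.
  by apply: aeW => z Ez /=; rewrite lee_fin (le_trans (gC _ Ez)) // ler_norm.
by rewrite lte_mul_pinfty.
Qed.
Lemma deriv_bound (R : realType) (F : R -> R) (x d C δ : R) : 0 < δ -> 0 <= C ->
  (forall h, `|h| < δ -> `|F (h + x) - F x - h * d| <= C * h ^+ 2) ->
  is_derive x 1 F d.
Proof.
move=> d0 C0 hb.
have cv : (fun h => h^-1 *: ((F \o shift x) (h *: 1) - F x)) @ 0^' --> d.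
  apply/cvgrPdist_lt => e e0.
  have ce : 0 < Num.min δ (e / (C + 1)).
    by rewrite lt_min d0 divr_gt0 // ltr_wpDl.
  apply/nbhs_ballP; exists (Num.min δ (e / (C + 1))) => //= h.
  rewrite /ball /= sub0r normrN lt_min => /andP[hd he] h0.
  rewrite /= scaler1 /shift /=.
  have -> : d - h^-1 * (F (h + x) - F x) = - h^-1 * (F (h + x) - F x - h * d).
    by field.
  rewrite normrM normrN normrV ?unitfE //.
  apply: (@le_lt_trans _ _ (`|h|^-1 * (C * h ^+ 2))).
    by rewrite ler_wpM2l ?invr_ge0 // hb.
  have -> : `|h|^-1 * (C * h ^+ 2) = C * `|h|.
    rewrite -(real_normK (num_real h)); field; rewrite normr_eq0 //.
  apply: (le_lt_trans (ler_wpM2l C0 (ltW he))).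
  rewrite mulrA ltr_pdivrMr ?ltr_wpDl //; nra.
apply: DeriveDef; first by apply/cvg_ex; exists d.
exact: cvg_lim cv.
Qed.
Lemma inv_le (R : realType) (p q : R) : 0 < p -> p <= q -> q^-1 <= p^-1.
Proof. by move=> p0 pq; rewrite lef_pV2 ?posrE // (lt_le_trans p0). Qed.

Lemma vbnd (R : realType) (x b M t : R) : b < x -> -M <= t <= b ->
  [/\ 0 < (x - t)^-1, (x - t)^-1 <= (x - b)^-1 & (x + M)^-1 <= (x - t)^-1].
Proof.
move=> bx /andP[Mt tb].
have h1 : 0 < x - t by rewrite subr_gt0 (le_lt_trans tb).
split; first by rewrite invr_gt0.
  by apply: inv_le; [rewrite subr_gt0|rewrite lerD2l lerN2].
by apply: inv_le => //; rewrite lerD2l -lerN2 opprK.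
Qed.

Lemma wbnd (R : realType) (x b t h : R) : b < x -> t <= b -> `|h| <= (x - b) / 2 ->
  0 < (h + x - t)^-1 /\ (h + x - t)^-1 <= 2 / (x - b).
Proof.
move=> bx tb hh.
have a0 : 0 < (x - b) / 2 by rewrite divr_gt0 // subr_gt0.
have hx : (x - b) / 2 <= h + x - t.
  move: (ler_norm (- h)); rewrite normrN => nh.
  have e1 : - h <= (x - b) / 2 by apply: le_trans nh hh.
  lra.
have hp : 0 < h + x - t by apply: lt_le_trans hx.
split; first by rewrite invr_gt0.
rewrite -[2 / (x - b)]invf_div; exact: inv_le.
Qed.

Lemma intb (R : realType) (mu : {measure set R -> \bar R}) (E : set R) (g : R -> R) (C : R) :
  measurable E -> mu E = 1%E -> measurable_fun setT g -> (forall t, E t -> `|g t| <= C) ->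
  mu.-integrable E (EFin \o g).
Proof.
move=> mE E1 mg gC; apply: (@bdd_int _ _ _ _ C) => //; first by rewrite E1 ltry.
exact: measurable_funS mg.
Qed.

Lemma intD (R : realType) (mu : {measure set R -> \bar R}) (E : set R) (f g : R -> R) :
  measurable E -> mu.-integrable E (EFin \o f) -> mu.-integrable E (EFin \o g) ->
  mu.-integrable E (EFin \o (fun t => f t + g t)).
Proof. move=> mE hf hg; exact: (integrableD mE hf hg). Qed.

Lemma intZ (R : realType) (mu : {measure set R -> \bar R}) (E : set R) (f : R -> R) (k : R) :
  measurable E -> mu.-integrable E (EFin \o f) ->
  mu.-integrable E (EFin \o (fun t => k * f t)).
Proof.
move=> mE hf; apply: (eq_integrable mE _ _ _ (integrableZl mE k hf)) => t _ /=.
by rewrite EFinM.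
Qed.

Lemma Rint_cst1 (R : realType) (mu : {measure set R -> \bar R}) (E : set R) (c : R) :
  measurable E -> mu E = 1%E -> \int[mu]_(t in E) c = c.
Proof. by move=> mE E1; rewrite Rintegral_cst // E1 /= mulr1. Qed.

Lemma intB (R : realType) (mu : {measure set R -> \bar R}) (E : set R) (f g : R -> R) :
  measurable E -> mu.-integrable E (EFin \o f) -> mu.-integrable E (EFin \o g) ->
  mu.-integrable E (EFin \o (fun t => f t - g t)).
Proof. move=> mE hf hg; exact: (integrableB mE hf hg). Qed.

Lemma Rint_le_cst (R : realType) (mu : {measure set R -> \bar R}) (E : set R) (g : R -> R) (C : R) :
  measurable E -> mu E = 1%E -> mu.-integrable E (EFin \o g) ->
  (forall t, E t -> g t <= C) -> \int[mu]_(t in E) g t <= C.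
Proof.
move=> mE E1 ig gC; rewrite -[leRHS](@Rint_cst1 _ mu E C mE E1).
apply: le_Rintegral => //.
by apply: (@intb _ _ _ _ `|C|) => // t _; rewrite normr_id.
Qed.

Lemma pM2 (R : realType) (a b A B : R) : 0 < a -> a <= A -> 0 < b -> b <= B -> a * b <= A * B.
Proof. by move=> a0 aA b0 bB; apply: ler_pM => //; apply: ltW. Qed.

Lemma pM3 (R : realType) (a b c A B C : R) : 0 < a -> a <= A -> 0 < b -> b <= B ->
  0 < c -> c <= C -> a * b * c <= A * B * C.
Proof.
move=> a0 aA b0 bB c0 cC; apply: ler_pM.
- by rewrite mulr_ge0 // ltW.
- exact: ltW.
- exact: pM2.
- exact: cC.
Qed.

Lemma derG (R : realType) (mu : {measure set R -> \bar R}) (E : set R) (M b : R) :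
  measurable E -> mu E = 1%E -> (forall t, E t -> -M <= t <= b) ->
  forall x, b < x -> is_derive x 1 (fun y => \int[mu]_(t in E) (y - t)^-1)
    (- \int[mu]_(t in E) ((x - t)^-1 * (x - t)^-1)).
Proof.
move=> mE E1 hE x bx.
have a0 : 0 < x - b by rewrite subr_gt0.
apply: (@deriv_bound _ _ x _ ((x - b)^-1 * (x - b)^-1 * (2 / (x - b))) ((x - b) / 2)).
- by rewrite divr_gt0.
- by rewrite !mulr_ge0 // ?invr_ge0 ?ltW.
move=> h hh.
have hh' : `|h| <= (x - b) / 2 by rewrite ltW.
have hv t : E t -> [/\ 0 < (x - t)^-1, (x - t)^-1 <= (x - b)^-1 & (x + M)^-1 <= (x - t)^-1].
  by move=> /hE; apply: vbnd.
have hw t : E t -> 0 < (h + x - t)^-1 /\ (h + x - t)^-1 <= 2 / (x - b).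
  by move=> /hE /andP[_ tb]; apply: wbnd.
have mv := @meas_inv _ x.
have mw := @meas_inv _ (h + x).
have iv : mu.-integrable E (EFin \o (fun t => (x - t)^-1)).
  apply: (@intb _ _ _ _ (x - b)^-1) => // t /hv [v0 v1 _].
  by rewrite ger0_norm ?(ltW v0).
have iw : mu.-integrable E (EFin \o (fun t => (h + x - t)^-1)).
  apply: (@intb _ _ _ _ (2 / (x - b))) => // t /hw [w0 w1].
  by rewrite ger0_norm ?(ltW w0).
have ivv : mu.-integrable E (EFin \o (fun t => (x - t)^-1 * (x - t)^-1)).
  apply: (@intb _ _ _ _ ((x - b)^-1 * (x - b)^-1)) => //.
    exact: measurable_funM.
  move=> t /hv [v0 v1 _].
  by rewrite normrM ger0_norm ?(ltW v0) //; apply: pM2.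
have ivvw : mu.-integrable E (EFin \o (fun t => (x - t)^-1 * (x - t)^-1 * (h + x - t)^-1)).
  apply: (@intb _ _ _ _ ((x - b)^-1 * (x - b)^-1 * (2 / (x - b)))) => //.
    by apply: measurable_funM => //; exact: measurable_funM.
  move=> t Et; have [v0 v1 _] := hv t Et; have [w0 w1] := hw t Et.
  by rewrite !normrM !ger0_norm ?(ltW v0) ?(ltW w0) //; apply: pM3.
have -> : \int[mu]_(t in E) (h + x - t)^-1 =
   \int[mu]_(t in E) (((x - t)^-1 - h * ((x - t)^-1 * (x - t)^-1)) +
      h ^+ 2 * ((x - t)^-1 * (x - t)^-1 * (h + x - t)^-1)).
  apply: eq_Rintegral => t; rewrite inE => Et.
  have [v0 _ _] := hv t Et; have [w0 _] := hw t Et.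
  have n1 : x - t != 0 by rewrite -invr_eq0 gt_eqF.
  have n2 : h + x - t != 0 by rewrite -invr_eq0 gt_eqF.
  by field; rewrite n1 n2.
rewrite RintegralD //; last 2 first.
- by apply: intB => //; exact: intZ.
- exact: intZ.
rewrite RintegralB //; last exact: intZ.
rewrite !RintegralZl //.
set J := \int[mu]_(t in E) ((x - t)^-1 * (x - t)^-1 * (h + x - t)^-1).
have -> : (\int[mu]_(t in E) (x - t)^-1) -
  h * (\int[mu]_(t in E) ((x - t)^-1 * (x - t)^-1)) + h ^+ 2 * J -
  (\int[mu]_(t in E) (x - t)^-1) -
  h * - (\int[mu]_(t in E) ((x - t)^-1 * (x - t)^-1)) = h ^+ 2 * J by ring.
have J0 : 0 <= J.
  apply: Rintegral_ge0 => t Et; have [v0 _ _] := hv t Et; have [w0 _] := hw t Et.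
  by rewrite !mulr_ge0 // ltW.
rewrite normrM ger0_norm ?sqr_ge0 // ger0_norm // mulrC ler_wpM2r ?sqr_ge0 //.
apply: Rint_le_cst => // t Et.
have [v0 v1 _] := hv t Et; have [w0 w1] := hw t Et.
exact: pM3.
Qed.

Lemma derH (R : realType) (mu : {measure set R -> \bar R}) (E : set R) (M b : R) :
  measurable E -> mu E = 1%E -> (forall t, E t -> -M <= t <= b) ->
  forall x, b < x -> is_derive x 1 (fun y => \int[mu]_(t in E) ((y - t)^-1 * (y - t)^-1))
    (-2 * \int[mu]_(t in E) ((x - t)^-1 * (x - t)^-1 * (x - t)^-1)).
Proof.
move=> mE E1 hE x bx.
have a0 : 0 < x - b by rewrite subr_gt0.
set A := (x - b)^-1; set B := 2 / (x - b).
have A0 : 0 < A by rewrite invr_gt0.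
have B0 : 0 < B by rewrite divr_gt0.
apply: (@deriv_bound _ _ x _ (A * A * B * (2 * A + B)) ((x - b) / 2)).
- by rewrite divr_gt0.
- by rewrite !mulr_ge0 ?addr_ge0 // ltW.
move=> h hh.
have hh' : `|h| <= (x - b) / 2 by rewrite ltW.
have hv t : E t -> [/\ 0 < (x - t)^-1, (x - t)^-1 <= A & (x + M)^-1 <= (x - t)^-1].
  by move=> /hE; apply: vbnd.
have hw t : E t -> 0 < (h + x - t)^-1 /\ (h + x - t)^-1 <= B.
  by move=> /hE /andP[_ tb]; apply: wbnd.
have mv := @meas_inv _ x.
have mw := @meas_inv _ (h + x).
have ivv : mu.-integrable E (EFin \o (fun t => (x - t)^-1 * (x - t)^-1)).
  apply: (@intb _ _ _ _ (A * A)) => //.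
    exact: measurable_funM.
  move=> t /hv [v0 v1 _].
  by rewrite normrM ger0_norm ?(ltW v0) //; apply: pM2.
have iww : mu.-integrable E (EFin \o (fun t => (h + x - t)^-1 * (h + x - t)^-1)).
  apply: (@intb _ _ _ _ (B * B)) => //.
    exact: measurable_funM.
  move=> t /hw [w0 w1].
  by rewrite normrM ger0_norm ?(ltW w0) //; apply: pM2.
have ivvv : mu.-integrable E (EFin \o (fun t => (x - t)^-1 * (x - t)^-1 * (x - t)^-1)).
  apply: (@intb _ _ _ _ (A * A * A)) => //.
    by apply: measurable_funM => //; exact: measurable_funM.
  move=> t Et; have [v0 v1 _] := hv t Et.
  by rewrite !normrM !ger0_norm ?(ltW v0) //; apply: pM3.
have bJ t : E t -> 0 < (x - t)^-1 * (x - t)^-1 * (h + x - t)^-1 * (2 * (x - t)^-1 + (h + x - t)^-1)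
   /\ (x - t)^-1 * (x - t)^-1 * (h + x - t)^-1 * (2 * (x - t)^-1 + (h + x - t)^-1)
      <= A * A * B * (2 * A + B).
  move=> Et; have [v0 v1 _] := hv t Et; have [w0 w1] := hw t Et.
  split; first by rewrite !mulr_gt0 ?addr_gt0 ?mulr_gt0.
  apply: pM2; first by rewrite !mulr_gt0.
  - exact: pM3.
  - by rewrite addr_gt0 ?mulr_gt0.
  - by rewrite lerD // ler_pM2l.
have iJ : mu.-integrable E (EFin \o (fun t => (x - t)^-1 * (x - t)^-1 * (h + x - t)^-1 *
     (2 * (x - t)^-1 + (h + x - t)^-1))).
  apply: (@intb _ _ _ _ (A * A * B * (2 * A + B))) => //.
    apply: measurable_funM => //.
      by apply: measurable_funM => //; exact: measurable_funM.
    apply: measurable_funD => //; exact: measurable_funM.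
  by move=> t /bJ [j0 j1]; rewrite ger0_norm ?(ltW j0).
have -> : \int[mu]_(t in E) ((h + x - t)^-1 * (h + x - t)^-1) =
   \int[mu]_(t in E) (((x - t)^-1 * (x - t)^-1 - (2 * h) * ((x - t)^-1 * (x - t)^-1 * (x - t)^-1)) +
      h ^+ 2 * ((x - t)^-1 * (x - t)^-1 * (h + x - t)^-1 * (2 * (x - t)^-1 + (h + x - t)^-1))).
  apply: eq_Rintegral => t; rewrite inE => Et.
  have [v0 _ _] := hv t Et; have [w0 _] := hw t Et.
  have n1 : x - t != 0 by rewrite -invr_eq0 gt_eqF.
  have n2 : h + x - t != 0 by rewrite -invr_eq0 gt_eqF.
  by field; rewrite n1 n2.
rewrite RintegralD //; last 2 first.
- by apply: intB => //; exact: intZ.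
- exact: intZ.
rewrite RintegralB //; last exact: intZ.
rewrite !RintegralZl //.
set J := \int[mu]_(t in E) ((x - t)^-1 * (x - t)^-1 * (h + x - t)^-1 * (2 * (x - t)^-1 + (h + x - t)^-1)).
set I2 := \int[mu]_(t in E) ((x - t)^-1 * (x - t)^-1).
set I3 := \int[mu]_(t in E) ((x - t)^-1 * (x - t)^-1 * (x - t)^-1).
have -> : I2 - 2 * h * I3 + h ^+ 2 * J - I2 - h * (-2 * I3) = h ^+ 2 * J by ring.
have J0 : 0 <= J.
  by apply: Rintegral_ge0 => t /bJ [j0 _]; rewrite ltW.
rewrite normrM ger0_norm ?sqr_ge0 // ger0_norm // mulrC ler_wpM2r ?sqr_ge0 //.
by apply: Rint_le_cst => // t /bJ [].
Qed.

Lemma ineqs (R : realType) (mu : {measure set R -> \bar R}) (E : set R) (M b : R) :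
  measurable E -> mu E = 1%E -> (forall t, E t -> -M <= t <= b) ->
  forall x, b < x ->
  [/\ 0 < \int[mu]_(t in E) (x - t)^-1,
      (\int[mu]_(t in E) (x - t)^-1) ^+ 2 <= \int[mu]_(t in E) ((x - t)^-1 * (x - t)^-1) &
      (\int[mu]_(t in E) ((x - t)^-1 * (x - t)^-1)) ^+ 2 <=
        (\int[mu]_(t in E) (x - t)^-1) * \int[mu]_(t in E) ((x - t)^-1 * (x - t)^-1 * (x - t)^-1)].
Proof.
move=> mE E1 hE x bx.
have a0 : 0 < x - b by rewrite subr_gt0.
have [t0 Et0] : E !=set0.
  apply/set0P; apply/negP => /eqP E0; move: E1; rewrite E0 measure0 => /esym/eqP.
  by rewrite eqe oner_eq0.
have xM : 0 < x + M.
  have /andP[h1 h2] := hE t0 Et0; lra.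
set A := (x - b)^-1.
have A0 : 0 < A by rewrite invr_gt0.
have hv t : E t -> [/\ 0 < (x - t)^-1, (x - t)^-1 <= A & (x + M)^-1 <= (x - t)^-1].
  by move=> /hE; apply: vbnd.
have mv := @meas_inv _ x.
have icst c : mu.-integrable E (EFin \o (fun _ : R => c)).
  by apply: (@intb _ _ _ _ `|c|) => //.
have iv : mu.-integrable E (EFin \o (fun t => (x - t)^-1)).
  apply: (@intb _ _ _ _ A) => // t /hv [v0 v1 _].
  by rewrite ger0_norm ?(ltW v0).
have ivv : mu.-integrable E (EFin \o (fun t => (x - t)^-1 * (x - t)^-1)).
  apply: (@intb _ _ _ _ (A * A)) => //.
    exact: measurable_funM.
  move=> t /hv [v0 v1 _].
  by rewrite normrM ger0_norm ?(ltW v0) //; apply: pM2.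
have ivvv : mu.-integrable E (EFin \o (fun t => (x - t)^-1 * (x - t)^-1 * (x - t)^-1)).
  apply: (@intb _ _ _ _ (A * A * A)) => //.
    by apply: measurable_funM => //; exact: measurable_funM.
  move=> t Et; have [v0 v1 _] := hv t Et.
  by rewrite !normrM !ger0_norm ?(ltW v0) //; apply: pM3.
set I1 := \int[mu]_(t in E) (x - t)^-1.
set I2 := \int[mu]_(t in E) ((x - t)^-1 * (x - t)^-1).
set I3 := \int[mu]_(t in E) ((x - t)^-1 * (x - t)^-1 * (x - t)^-1).
have I1p : 0 < I1.
  apply: (@lt_le_trans _ _ (x + M)^-1); first by rewrite invr_gt0.
  rewrite -[X in X <= _](@Rint_cst1 _ mu E _ mE E1).
  by apply: le_Rintegral => // t /hv [].
split => //.
  have h0 : 0 <= \int[mu]_(t in E) ((x - t)^-1 * (x - t)^-1 - (2 * I1) * (x - t)^-1 + I1 ^+ 2).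
    apply: Rintegral_ge0 => t _.
    have -> : (x - t)^-1 * (x - t)^-1 - (2 * I1) * (x - t)^-1 + I1 ^+ 2 = ((x - t)^-1 - I1) ^+ 2 by ring.
    exact: sqr_ge0.
  have e : \int[mu]_(t in E) ((x - t)^-1 * (x - t)^-1 - (2 * I1) * (x - t)^-1 + I1 ^+ 2)
     = I2 - 2 * I1 * I1 + I1 ^+ 2.
    rewrite RintegralD //; last by apply: intB => //; exact: intZ.
    by rewrite RintegralB ?RintegralZl ?Rint_cst1 //; exact: intZ.
  rewrite e in h0; nra.
have h0 : 0 <= \int[mu]_(t in E) (I1 ^+ 2 * ((x - t)^-1 * (x - t)^-1 * (x - t)^-1)
     - (2 * I1 * I2) * ((x - t)^-1 * (x - t)^-1) + I2 ^+ 2 * (x - t)^-1).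
  apply: Rintegral_ge0 => t Et; have [v0 _ _] := hv t Et.
  have -> : I1 ^+ 2 * ((x - t)^-1 * (x - t)^-1 * (x - t)^-1)
     - (2 * I1 * I2) * ((x - t)^-1 * (x - t)^-1) + I2 ^+ 2 * (x - t)^-1 =
     (x - t)^-1 * (I1 * (x - t)^-1 - I2) ^+ 2 by ring.
  by rewrite mulr_ge0 ?sqr_ge0 // ltW.
have e : \int[mu]_(t in E) (I1 ^+ 2 * ((x - t)^-1 * (x - t)^-1 * (x - t)^-1)
     - (2 * I1 * I2) * ((x - t)^-1 * (x - t)^-1) + I2 ^+ 2 * (x - t)^-1) =
   I1 ^+ 2 * I3 - 2 * I1 * I2 * I2 + I2 ^+ 2 * I1.
  rewrite RintegralD //; last 2 first.
  - by apply: intB => //; exact: intZ.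
  - exact: intZ.
  by rewrite RintegralB ?RintegralZl //; exact: intZ.
rewrite e in h0; nra.
Qed.

Theorem mainTheorem5 (R : realType) (mu : probability R R)
  (hbdd : exists M : R, forall t, msupport mu t -> `|t| <= M) :
  let b := sup (msupport mu) in
  let G := cauchy_transform mu in
  let Phi := fun x : R => (G x) ^+ 2 / derive1 G x in
  [/\ {within [set x | b < x], continuous Phi},
      {in [set x | b < x] &, {homo Phi : x y / x <= y >-> y <= x}}
    & forall x, b < x -> -1 <= Phi x <= 0].
Proof.
move=> b G Phi.
have [M hM] := hbdd.
have hub : has_ubound (msupport mu) by exists M => y /hM; apply: le_trans (ler_norm y).
have hs : forall c, msupport mu c -> -M <= c <= b.
  move=> c sc; apply/andP; split.
    by have := hM c sc; rewrite ler_norml => /andP[].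
  exact: (ub_le_sup hub).
pose E := `[-M, b]%classic.
have mE : measurable E by exact: measurable_itv.
have hE t : E t -> -M <= t <= b by rewrite /E /= in_itv.
have nE : mu (~` E) = 0%E := @null_out _ mu M b hs.
have E1 : mu E = 1%E.
  have := probability_setT mu; rewrite -(setUv E) measureU //; last 2 first.
  - exact: measurableC.
  - by rewrite setICr.
  move=> <-; rewrite [X in _ = (_ + X)%E](_ : _ = 0%E) ?adde0 //.
pose I1 := fun y => \int[mu]_(t in E) (y - t)^-1.
pose I2 := fun y => \int[mu]_(t in E) ((y - t)^-1 * (y - t)^-1).
pose I3 := fun y => \int[mu]_(t in E) ((y - t)^-1 * (y - t)^-1 * (y - t)^-1).
have GE : G = I1.
  apply/funext => y; rewrite /G /cauchy_transform /I1.
  apply: intTE => //; exact: meas_inv.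
have dI1 x : b < x -> is_derive x 1 I1 (- I2 x) := @derG _ mu E M b mE E1 hE x.
have dI2 x : b < x -> is_derive x 1 I2 (-2 * I3 x) := @derH _ mu E M b mE E1 hE x.
have ineq x : b < x -> [/\ 0 < I1 x, I1 x ^+ 2 <= I2 x & I2 x ^+ 2 <= I1 x * I3 x] :=
  @ineqs _ mu E M b mE E1 hE x.
have PhiE x : b < x -> Phi x = I1 x ^+ 2 * (- I2 x)^-1.
  move=> bx; rewrite /Phi derive1E GE (@derive_val _ _ _ _ _ _ _ (dI1 x bx)) //.
pose D x := 2 * I1 x * (I2 x ^+ 2 - I1 x * I3 x) / (I2 x ^+ 2).
have I2p x : b < x -> 0 < I2 x.
  move=> bx; have [p1 p2 _] := ineq x bx.
  by apply: lt_le_trans p2; rewrite exprn_gt0.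
have dPhi x : b < x -> is_derive x 1 Phi (D x).
  move=> bx.
  have n2 : (- I2) x != 0 by rewrite /= oppr_eq0 gt_eqF // I2p.
  have d1 := is_deriveX 2 (dI1 x bx).
  have d2 := is_deriveV n2 (is_deriveN (dI2 x bx)).
  have d3 := is_deriveM d1 d2.
  apply: (near_eq_is_derive _ (is_derive_eq d3 _)).
    near=> y.
    have by' : b < y by near: y; exact: lt_nbhsr.
    by rewrite PhiE.
  have n2' : I2 x != 0 by rewrite gt_eqF // I2p.
  rewrite !fctE /GRing.scale /= /D; field; exact: n2'.
have Dle x : b < x -> D x <= 0.
  move=> bx; have [p1 p2 p3] := ineq x bx.
  rewrite /D; apply: mulr_le0_ge0; last by rewrite invr_ge0 sqr_ge0.
  apply: mulr_ge0_le0; first by rewrite mulr_ge0 // ltW.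
  by rewrite subr_le0.
have cPhi x : b < x -> {for x, continuous Phi}.
  move=> bx; apply: differentiable_continuous; apply/derivable1_diffP.
  exact: (@ex_derive _ _ _ _ _ _ _ (dPhi x bx)).
split.
- rewrite continuous_open_subspace; last exact: open_gt.
  by move=> x; rewrite inE /= => bx; exact: cPhi.
- move=> x y; rewrite !inE /= => bx by' xy.
  have [->//|xy'] := eqVneq x y.
  have xlty : x < y by rewrite lt_neqAle xy' xy.
  apply: (@ler0_derive1_le_cc _ Phi x y).
  + move=> z; rewrite in_itv /= => /andP[xz _].
    exact: (@ex_derive _ _ _ _ _ _ _ (dPhi z (lt_trans bx xz))).
  + move=> z; rewrite in_itv /= => /andP[xz _].
    have bz := lt_trans bx xz.
    by rewrite derive1E (@derive_val _ _ _ _ _ _ _ (dPhi z bz)) Dle.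
  + apply: continuous_in_subspaceT => z; rewrite inE /= in_itv /= => /andP[xz _].
    exact: cPhi (lt_le_trans bx xz).
  + by rewrite in_itv /= lexx xy.
  + by rewrite in_itv /= lexx xy.
  + exact: xy.
- move=> x bx; have [p1 p2 _] := ineq x bx; have q0 := I2p x bx.
  rewrite PhiE //.
  have -> : I1 x ^+ 2 * (- I2 x)^-1 = - (I1 x ^+ 2 / I2 x) by rewrite invrN mulrN.
  apply/andP; split.
    by rewrite lerNr opprK ler_pdivrMr // mul1r.
  by rewrite oppr_le0 divr_ge0 ?sqr_ge0 // ltW.
Unshelve. all: end_near.
Qed.
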